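(* Let $n=2p$ with $p\ge 11$ prime, and let $G(\circ)$ be a group of order $n$ on $G$. Then $\delta_{\cong}(\circ)<\delta_{\not\cong}(\circ)$.
   Context: $G$ is a set of size $n$. $\mathrm{dist}(\circ,\ast)=|\{(a,b)\in G\times G:a\circ b\ne a\ast b\}|$. $\delta_{\cong}(\circ)=\min\{\mathrm{dist}(\circ,\ast): G(\ast)\cong G(\circ),\ G(\ast)\ne G(\circ)\}$ and $\delta_{\not\cong}(\circ)=\min\{\mathrm{dist}(\circ,\ast): G(\ast)\not\cong G(\circ)\}$ (minima over groups $G(\ast)$ defined on $G$). *)

(* Defs.v *)
From mathcomp Require Import all_boot all_order all_fingroup.
Set Implicit Arguments. Unset Strict Implicit. Unset Printing Implicit Defensive.

(* A binary operation on the finite set G (carrier T) is a finite function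
   T * T -> T; [binop T] is a finite type, so we can take minima over it. *)
Definition binop (T : finType) := {ffun T * T -> T}.

Definition mulop (T : finType) (o : binop T) (x y : T) : T := o (x, y).

Definition is_group (T : finType) (o : binop T) : bool :=
  [forall x, forall y, forall z,
      mulop o (mulop o x y) z == mulop o x (mulop o y z)] &&
  [exists e, [forall x, (mulop o e x == x) && (mulop o x e == x)] &&
             [forall x, exists y, (mulop o x y == e) && (mulop o y x == e)]].

Definition isomorphic (T : finType) (o1 o2 : binop T) : bool :=
  [exists f : {perm T}, forall x, forall y,
      f (mulop o1 x y) == mulop o2 (f x) (f y)].

Definition dist (T : finType) (o1 o2 : binop T) : nat :=
  #|[set ab : T * T | o1 ab != o2 ab]|.

(* Minimum of dist(o, * ) over groups * on G satisfying P; the default value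
   #|T| * #|T| (an upper bound for any distance) is only used if no such
   group exists. *)
Definition delta_min (T : finType) (o : binop T) (P : pred (binop T)) : nat :=
  \big[minn/#|T| * #|T|]_(s : binop T | is_group s && P s) dist o s.

Definition delta_iso (T : finType) (o : binop T) : nat :=
  delta_min o (fun s => isomorphic s o && (s != o)).

Definition delta_noniso (T : finType) (o : binop T) : nat :=
  delta_min o (fun s => ~~ isomorphic s o).

(* Main.v *)
Require Import Defs.
From mathcomp Require Import all_boot all_order all_fingroup all_solvable.
From mathcomp Require Import zify.
Set Implicit Arguments. Unset Strict Implicit. Unset Printing Implicit Defensive.

Section Order2p.
Local Open Scope group_scope.
Variables (gT : finGroupType) (G : {group gT}) (p : nat).
Hypotheses (pp : prime p) (p_gt2 : 2 < p) (oG : #|G| = (2 * p)%N).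

Lemma big_sub (H : {group gT}) : H \subset G -> p < #|H| -> H :=: G.
Proof.
move=> sHG ltpH; apply/eqP; rewrite eqEcard sHG /= oG.
have /dvdnP[k hk] := cardSg sHG; rewrite oG in hk.
have h0 : 0 < #|H| by case: #|H| ltpH.
case: k hk => [|[|k]] hk.
all: rewrite ?mul0n ?mul1n in hk; try lia.
by rewrite hk.
Qed.

Lemma not_comm x g : ~~ abelian G -> x \in G -> #[x] = p -> g \in G ->
  g \notin <[x]> -> g * x != x * g.
Proof.
move=> nab Gx ox Gg gnx; apply/eqP => cgx.
have HG : <[x]> <*> <[g]> \subset G by rewrite join_subG !cycle_subG Gx Gg.
have ltp : p < #|<[x]> <*> <[g]>|.
  rewrite -ox orderE; apply: proper_card; rewrite properEneq joing_subl andbT.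
  apply/eqP => E; move: gnx; rewrite E.
  by rewrite (subsetP (joing_subr _ _)) // cycle_id.
have := big_sub HG ltp => E; move: nab; rewrite -E abelianY !cycle_abelian /=.
have gC : g \in 'C(<[x]>) by rewrite cent_cycle; apply/cent1P.
by rewrite cycle_subG; move/negP; apply.
Qed.

Lemma cycle_prime (x h : gT) : #[x] = p -> h \in <[x]> -> h != 1 -> x \in <[h]>.
Proof.
move=> ox hx h1.
have sub : <[h]> \subset <[x]> by rewrite cycle_subG.
have : #[h] = p.
  have d1 : #[h] != 1%N by rewrite order_eq1.
  have dv : #[h] %| p by rewrite -ox orderE order_dvdG.
  exact: (elimT (prime_nt_dvdP pp d1) dv).
move=> oh; have : <[h]> == <[x]>.
  by rewrite eqEcard sub /= -(orderE x) -(orderE h) oh ox.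
by move/eqP ->; apply: cycle_id.
Qed.

Lemma noncommP x g h : ~~ abelian G -> x \in G -> #[x] = p -> g \in G ->
  g \notin <[x]> -> h \in <[x]> -> h != 1 -> g * h != h * g.
Proof.
move=> nab Gx ox Gg gnx hx h1; apply/eqP => cgh.
have : g \in 'C[x].
  have : <[h]> \subset 'C[g] by rewrite cycle_subG; apply/cent1P.
  move/subsetP/(_ x (cycle_prime ox hx h1))/cent1P => cxg.
  by apply/cent1P.
by move/cent1P => /eqP; apply/negP; apply: not_comm.
Qed.

Lemma coset_in x g g' : x \in G -> #[x] = p -> g \in G :\: <[x]> ->
  g' \in G :\: <[x]> -> g^-1 * g' \in <[x]>.
Proof.
move=> Gx ox /setDP[Gg gnx] Gg'.
have sPG : <[x]> \subset G by rewrite cycle_subG.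
have cD : #|G :\: <[x]>| = p.
  by rewrite cardsD (setIidPr sPG) oG -(orderE x) ox; lia.
have sub : g *: <[x]> \subset G :\: <[x]>.
  apply/subsetP => y; rewrite mem_lcoset => yP; apply/setDP; split.
    by rewrite -(mulKVg g y) groupM // (subsetP sPG).
  apply/negP => yx; move/negP: gnx; apply.
  rewrite -(mulKVg y g) groupM // -[y^-1 * g]invgK groupV invMg invgK //.
have : g *: <[x]> == G :\: <[x]>.
  by rewrite eqEcard sub /= cD card_lcoset -ox orderE.
by move/eqP => E; move: Gg'; rewrite -E mem_lcoset.
Qed.

Lemma noncomm_out x g g' : ~~ abelian G -> x \in G -> #[x] = p ->
  g \in G :\: <[x]> -> g' \in G :\: <[x]> -> g != g' -> g * g' != g' * g.
Proof.
move=> nab Gx ox gD g'D ne; apply/eqP => c.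
have hx := coset_in Gx ox gD g'D.
have h1 : g^-1 * g' != 1.
  by apply: contra ne; rewrite -eq_mulVg1.
move: gD => /setDP[Gg gnx].
have := noncommP nab Gx ox Gg gnx hx h1; apply/negP; rewrite negbK.
by rewrite mulgA mulgV mul1g -mulgA -c mulgA mulVg mul1g.
Qed.

Definition NC := [set uv : gT * gT | [&& uv.1 \in G, uv.2 \in G & uv.1 * uv.2 != uv.2 * uv.1]].

Lemma cardU_disj (T : finType) (A B : {set T}) : [disjoint A & B] -> #|A :|: B| = #|A| + #|B|.
Proof. by move=> d; apply/eqP; rewrite (leq_card_setU A B).2. Qed.

Lemma disjP (T : finType) (A B : {set T}) :
  (forall x, x \in A -> x \in B -> False) -> [disjoint A & B].
Proof.
move=> H; rewrite -setI_eq0; apply/eqP/setP => x; rewrite inE in_set0.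
by apply/negP => /andP[xa xb]; exact: H xa xb.
Qed.

Lemma NC_card : ~~ abelian G -> (3 * (p * (p - 1)) <= #|NC|)%N.
Proof.
move=> nab.
have dvp : p %| #|G| by rewrite oG dvdn_mull.
have [x Gx ox] := Cauchy pp dvp.
have sPG : <[x]> \subset G by rewrite cycle_subG.
set A := G :\: <[x]>; set B := <[x]> :\ 1.
have cA : #|A| = p by rewrite cardsD (setIidPr sPG) oG -ox orderE; lia.
have cB : #|B| = (p - 1)%N.
  have := cardsD1 1 <[x]>; rewrite group1 -ox orderE => ->.
  by rewrite /B add1n subn1.
set X1 := setX A B; set X2 := setX B A.
set D := [set (g, g) | g in A]; set X3 := setX A A :\: D.
have cX3 : #|X3| = (p * p - p)%N.
  rewrite cardsD (setIidPr _); last first.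
    by apply/subsetP => _ /imsetP[g Ag ->]; rewrite inE /= Ag.
  by rewrite cardsX card_imset ?cA // => a b [].
have d12 : [disjoint X1 & X2].
  apply/disjP => [[u v]]; rewrite !inE /=.
  by case: (u \in <[x]>); case: (v \in <[x]>); rewrite /= ?andbF.
have d3 : [disjoint X1 :|: X2 & X3].
  apply/disjP => [[u v]]; rewrite !inE /=.
  by case: (u \in <[x]>); case: (v \in <[x]>); rewrite /= ?andbF.
have sub : X1 :|: X2 :|: X3 \subset NC.
  apply/subsetP => [[u v]]; rewrite !inE /=.
  case/orP => [/orP[]|].
  - case/and3P => /andP[nu Gu] v1 vx.
    by rewrite Gu (subsetP sPG) //= (noncommP (x := x)).
  - case/and3P => /andP[u1 ux] nv Gv.
    by rewrite Gv (subsetP sPG) //= eq_sym (noncommP (x := x)).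
  - case/and4P => nD /andP[nu Gu] nv Gv.
    rewrite Gu Gv (noncomm_out (x := x)) ?inE ?Gu ?Gv ?nu ?nv //.
    by apply: contra nD => /eqP <-; apply/imsetP; exists u; rewrite // inE Gu nu.
have := subset_leq_card sub.
rewrite cardU_disj // cardU_disj // !cardsX cA cB cX3.
move=> H; apply: leq_trans H.
have pge : (1 <= p)%N by lia.
nia.
Qed.
Lemma ab_cyclic : abelian G -> cyclic G.
Proof.
move=> ab.
have dvp : p %| #|G| by rewrite oG dvdn_mull.
have dv2 : 2 %| #|G| by rewrite oG dvdn_mulr.
have [x Gx ox] := Cauchy pp dvp.
have [y Gy oy] := Cauchy (isT : prime 2) dv2.
have cxy : commute x y := (centsP ab) x Gx y Gy.
have cop : coprime #[x] #[y].
  rewrite ox oy prime_coprime //; apply/negP => /dvdn_leq; lia.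
have oxy : #[x * y] = (p * 2)%N by rewrite orderM // ox oy.
apply/cyclicP; exists (x * y); apply/eqP; rewrite eq_sym eqEcard cycle_subG groupM //=.
by rewrite oG -orderE oxy mulnC.
Qed.

Lemma nab_dihedral : ~~ abelian G -> G \isog [set: 'D_(2 * p)].
Proof.
move=> nab.
have dvp : p %| #|G| by rewrite oG dvdn_mull.
have dv2 : 2 %| #|G| by rewrite oG dvdn_mulr.
have [x Gx ox] := Cauchy pp dvp.
have [y Gy oy] := Cauchy (isT : prime 2) dv2.
have ynx : y \notin <[x]>.
  apply/negP => yx; have := order_dvdG yx; rewrite -orderE ox oy.
  by rewrite (dvdn_prime2 (isT : prime 2) pp) => /eqP E; move: p_gt2; rewrite -E.
have nc := not_comm nab Gx ox Gy ynx.
have ne : y != y ^ x.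
  apply: contra nc => /eqP E; apply/eqP; rewrite conjgC -E.
  by [].
have oyx : #[y ^ x] = 2 by rewrite orderJ.
have isoH := involutions_gen_dihedral oy oyx ne.
set H := <<[set y; y ^ x]>> in isoH.
have sHG : H \subset G.
  by rewrite gen_subG; apply/subsetP => z /set2P[] ->; rewrite ?groupJ.
have yH : y \in H by rewrite mem_gen // set21.
have ge3 : (3 <= #|H|)%N.
  have s3 : 1 |: [set y; y ^ x] \subset H.
    by rewrite subUset sub1set group1 subset_gen.
  have := subset_leq_card s3; rewrite cardsU1 cards2 ne !inE.
  have y1 : y != 1 by rewrite -order_eq1 oy.
  have yx1 : y ^ x != 1 by rewrite -order_eq1 oyx.
  by rewrite (eq_sym 1 y) (eq_sym 1 (y ^ x)) (negbTE y1) (negbTE yx1).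
have ltp : (p < #|H|)%N.
  have := order_dvdG yH; rewrite oy => /dvdnP[k hk].
  have : (k * 2 %| p * 2)%N by rewrite -hk mulnC -oG cardSg.
  rewrite dvdn_pmul2r // => /(primeP pp).2 /orP[] /eqP ek; rewrite ek in hk.
    by rewrite hk in ge3.
  by rewrite hk; lia.
have HG : <<[set y; y ^ x]>> = G := big_sub sHG ltp.
by rewrite /H HG oG in isoH.
Qed.

End Order2p.

Local Open Scope group_scope.
Lemma iso_same (gT1 gT2 : finGroupType) (G1 : {group gT1}) (G2 : {group gT2}) p :
  prime p -> 2 < p -> #|G1| = (2 * p)%N -> #|G2| = (2 * p)%N ->
  abelian G1 = abelian G2 -> G1 \isog G2.
Proof.
move=> pp p2 o1 o2 ab.
case: (boolP (abelian G1)) => ab1.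
  have c1 := ab_cyclic pp p2 o1 ab1.
  rewrite ab in ab1; have c2 := ab_cyclic pp p2 o2 ab1.
  by rewrite isog_cyclic_card // c2 o1 o2 eqxx.
have i1 := nab_dihedral pp p2 o1 ab1.
rewrite ab in ab1; have i2 := nab_dihedral pp p2 o2 ab1.
by apply: isog_trans i1 _; rewrite isog_sym.
Qed.


Local Close Scope group_scope.
Section BinGroup.
Variables (T : finType) (o : binop T).
Hypothesis Ho : is_group o.

Lemma mA x y z : mulop o (mulop o x y) z = mulop o x (mulop o y z).
Proof. by case/andP: Ho => /forallP/(_ x)/forallP/(_ y)/forallP/(_ z)/eqP. Qed.

Lemma exid : exists e, [forall x, (mulop o e x == x) && (mulop o x e == x)] &&
  [forall x, exists y, (mulop o x y == e) && (mulop o y x == e)].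
Proof. by case/andP: Ho => _ /existsP. Qed.

Definition e0 := xchoose exid.

Lemma m1x x : mulop o e0 x = x.
Proof. by case/andP: (xchooseP exid) => /forallP/(_ x)/andP[/eqP]. Qed.
Lemma mx1 x : mulop o x e0 = x.
Proof. by case/andP: (xchooseP exid) => /forallP/(_ x)/andP[_ /eqP]. Qed.

Lemma inv_ex x : exists y, (mulop o x y == e0) && (mulop o y x == e0).
Proof. by case/andP: (xchooseP exid) => _ /forallP/(_ x)/existsP. Qed.

Definition inv x := xchoose (inv_ex x).
Lemma mxV x : mulop o x (inv x) = e0.
Proof. by case/andP: (xchooseP (inv_ex x)) => /eqP. Qed.
Lemma mVx x : mulop o (inv x) x = e0.
Proof. by case/andP: (xchooseP (inv_ex x)) => _ /eqP. Qed.

Lemma rcanc x : injective (fun z => mulop o z x).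
Proof.
move=> z w /= /(congr1 (fun t => mulop o t (inv x))).
by rewrite !mA mxV !mx1.
Qed.

Lemma lcanc x : injective (mulop o x).
Proof.
move=> z w /(congr1 (mulop o (inv x))).
by rewrite -!mA mVx !m1x.
Qed.

Definition rho x : {perm T} := perm (@rcanc x).
Lemma rhoE x z : rho x z = mulop o z x.
Proof. by rewrite permE. Qed.
Lemma rhoM x y : rho (mulop o x y) = (rho x * rho y)%g.
Proof. by apply/permP => z; rewrite permM !rhoE mA. Qed.
Lemma rho_inj : injective rho.
Proof. by move=> x y E; rewrite -(m1x x) -(m1x y) -!rhoE E. Qed.

Definition Gs := [set rho x | x in T].
Lemma Gs_group : group_set Gs.
Proof.
apply/group_setP; split.
  apply/imsetP; exists e0 => //; apply/permP => z; rewrite perm1 rhoE mx1 //.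
by move=> _ _ /imsetP[x _ ->] /imsetP[y _ ->]; rewrite -rhoM imset_f.
Qed.
Canonical GG := Group Gs_group.

Lemma card_GG : #|GG| = #|T|.
Proof. exact: card_imset _ rho_inj. Qed.

Lemma comm_rho x y :
  ((rho x * rho y)%g == (rho y * rho x)%g) = (mulop o x y == mulop o y x).
Proof. by rewrite -!rhoM (inj_eq rho_inj). Qed.

Lemma abelian_GG : abelian GG = [forall x, forall y, mulop o x y == mulop o y x].
Proof.
apply/idP/idP => [ab | /forallP c].
  apply/forallP => x; apply/forallP => y; rewrite -comm_rho; apply/eqP.
  have Hx : rho x \in GG by apply/imsetP; exists x.
  have Hy : rho y \in GG by apply/imsetP; exists y.
  exact: (centsP ab) _ Hx _ Hy.
apply/centsP => _ /imsetP[x _ ->] _ /imsetP[y _ ->]; apply/eqP.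
by rewrite comm_rho; exact: (forallP (c x) y).
Qed.

Definition NCb := [set ab : T * T | mulop o ab.1 ab.2 != mulop o ab.2 ab.1].

Lemma NC_NCb : #|NC GG| <= #|NCb|.
Proof.
apply: leq_trans (leq_imset_card (fun ab => (rho ab.1, rho ab.2)) NCb).
apply: subset_leq_card; apply/subsetP => [[u v]]; rewrite inE /=.
case/and3P => /imsetP[x _ ->] /imsetP[y _ ->] c.
by apply/imsetP; exists (x, y) => //; rewrite inE /= -comm_rho.
Qed.

End BinGroup.

Lemma iso_of_isog (T : finType) (o s : binop T) (Ho : is_group o) (Hs : is_group s) :
  (GG Hs \isog GG Ho)%g -> isomorphic s o.
Proof.
case/isogP => f injf imf.
pose phi x := f (rho Hs x) (e0 Ho).
have rin x : rho Hs x \in GG Hs by apply/imsetP; exists x.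
have rphi x : rho Ho (phi x) = f (rho Hs x).
  have : f (rho Hs x) \in (f @* GG Hs)%g by apply: mem_morphim.
  rewrite imf => /imsetP[y _ E].
  by rewrite /phi E rhoE m1x.
have phi_inj : injective phi.
  move=> x y E; apply: (rho_inj (Ho := Hs)); apply: (injmP injf) => //.
  by rewrite -!rphi E.
apply/existsP; exists (perm phi_inj); apply/forallP => x; apply/forallP => y.
rewrite !permE; apply/eqP; apply: (rho_inj (Ho := Ho)).
rewrite rphi !rhoM !rphi morphM //.
Qed.

Definition cop (T : finType) (o : binop T) (f : {perm T}) : binop T :=
  [ffun ab => (f^-1)%g (o (f ab.1, f ab.2))].

Lemma copE (T : finType) (o : binop T) f x y :
  mulop (cop o f) x y = (f^-1)%g (mulop o (f x) (f y)).
Proof. by rewrite /mulop ffunE. Qed.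

Lemma cop_group (T : finType) (o : binop T) (Ho : is_group o) f : is_group (cop o f).
Proof.
apply/andP; split.
  apply/forallP => x; apply/forallP => y; apply/forallP => z.
  by rewrite !copE !permKV mA.
apply/existsP; exists ((f^-1)%g (e0 Ho)); apply/andP; split.
  by apply/forallP => x; rewrite !copE permKV m1x mx1 permK !eqxx.
apply/forallP => x; apply/existsP; exists ((f^-1)%g (inv Ho (f x))).
by rewrite !copE permKV mxV mVx !eqxx.
Qed.

Lemma cop_iso (T : finType) (o : binop T) f : isomorphic (cop o f) o.
Proof.
apply/existsP; exists f; apply/forallP => x; apply/forallP => y.
by rewrite copE permKV.
Qed.

Lemma dist_sym (T : finType) (o s : binop T) : dist o s = dist s o.
Proof. by rewrite /dist; apply: eq_card => ab; rewrite !inE eq_sym. Qed.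

Lemma cardU_le (T : finType) (A B : {set T}) : #|A :|: B| <= #|A| + #|B|.
Proof. exact: (leq_card_setU A B).1. Qed.

Lemma cardU_leq (T : finType) (A B : {set T}) m k :
  #|A| <= m -> #|B| <= k -> #|A :|: B| <= m + k.
Proof. by move=> h1 h2; apply: leq_trans (cardU_le A B) _; apply: leq_add. Qed.

Lemma NCb_dist (T : finType) (o s : binop T) :
  (forall x y, mulop o x y = mulop o y x) -> #|NCb s| <= 2 * dist o s.
Proof.
move=> com.
set D := [set ab | o ab != s ab].
have sub : NCb s \subset D :|: [set (ab.2, ab.1) | ab in D].
  apply/subsetP => [[x y]]; rewrite inE /= => nc; rewrite inE.
  case: (boolP ((x, y) \in D)) => //= nD; apply/imsetP; exists (y, x) => //.
  move: nD; rewrite !inE /= negbK => /eqP E.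
  have -> : o (y, x) = mulop o y x by [].
  by rewrite -com /mulop E.
apply: leq_trans (subset_leq_card sub) _.
apply: leq_trans (cardU_le _ _) _.
by rewrite mul2n -addnn leq_add2l leq_imset_card.
Qed.

Lemma card_img_le (T : finType) (X : {set T * T}) (g : T -> T * T) :
  (forall ab, ab \in X -> exists z, ab = g z) -> #|X| <= #|T|.
Proof.
move=> H; apply: leq_trans (leq_imset_card g T); apply: subset_leq_card.
by apply/subsetP => ab /H [z ->]; apply/imsetP; exists z.
Qed.

Section Upper.
Variables (T : finType) (o : binop T) (Ho : is_group o) (a : T).
Hypothesis ae : a != e0 Ho.
Let f := tperm (e0 Ho) a.

Lemma cop_ne : cop o f != o.
Proof.
apply/eqP => E.
have : mulop (cop o f) a (e0 Ho) = e0 Ho.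
  by rewrite copE tpermV /f tpermR tpermL m1x tpermR.
by rewrite E mx1 => /eqP; apply/negP.
Qed.

Lemma dist_cop : dist o (cop o f) <= 6 * #|T|.
Proof.
set e := e0 Ho.
pose X1 := [set ab : T * T | ab.1 == e]; pose X2 := [set ab : T * T | ab.1 == a].
pose X3 := [set ab : T * T | ab.2 == e]; pose X4 := [set ab : T * T | ab.2 == a].
pose X5 := [set ab : T * T | mulop o ab.1 ab.2 == e].
pose X6 := [set ab : T * T | mulop o ab.1 ab.2 == a].
have sub : [set ab | o ab != cop o f ab] \subset X1 :|: X2 :|: X3 :|: X4 :|: X5 :|: X6.
  apply/subsetP => [[x y]]; rewrite !inE /=; apply: contraR.
  rewrite !negb_or => /andP[/andP[/andP[/andP[/andP[x1 x2] y1] y2] m1] m2].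
  have -> : cop o f (x, y) = mulop (cop o f) x y by [].
  have fx : f x = x by rewrite /f tpermD // eq_sym.
  have fy : f y = y by rewrite /f tpermD // eq_sym.
  have fm : f (mulop o x y) = mulop o x y by rewrite /f tpermD // eq_sym.
  by rewrite copE tpermV -/f fx fy fm.
have c1 : #|X1| <= #|T|.
  by apply: (card_img_le (g := fun z => (e, z))) => [[x y]]; rewrite inE /= => /eqP ->; exists y.
have c2 : #|X2| <= #|T|.
  by apply: (card_img_le (g := fun z => (a, z))) => [[x y]]; rewrite inE /= => /eqP ->; exists y.
have c3 : #|X3| <= #|T|.
  by apply: (card_img_le (g := fun z => (z, e))) => [[x y]]; rewrite inE /= => /eqP ->; exists x.
have c4 : #|X4| <= #|T|.
  by apply: (card_img_le (g := fun z => (z, a))) => [[x y]]; rewrite inE /= => /eqP ->; exists x.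
have c5 : #|X5| <= #|T|.
  apply: (card_img_le (g := fun z => (z, mulop o (inv Ho z) e))) => [[x y]].
  by rewrite inE /= => /eqP <-; exists x; rewrite -(mA Ho) (mVx Ho) (m1x Ho).
have c6 : #|X6| <= #|T|.
  apply: (card_img_le (g := fun z => (z, mulop o (inv Ho z) a))) => [[x y]].
  by rewrite inE /= => /eqP <-; exists x; rewrite -(mA Ho) (mVx Ho) (m1x Ho).
apply: leq_trans (subset_leq_card sub) _.
have -> : 6 * #|T| = #|T| + #|T| + #|T| + #|T| + #|T| + #|T| by lia.
by do 5 apply: cardU_leq => //.
Qed.
End Upper.

Lemma comm_of_ab (T : finType) (o : binop T) (Ho : is_group o) :
  abelian (GG Ho) -> forall x y, mulop o x y = mulop o y x.
Proof. by rewrite abelian_GG => /forallP c x y; apply/eqP; exact: (forallP (c x) y). Qed.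

Lemma dist_bound (T : finType) (o s : binop T) (Ho : is_group o) (Hs : is_group s) p :
  prime p -> 2 < p -> #|T| = (2 * p)%N ->
  abelian (GG Ho) -> ~~ abelian (GG Hs) -> 3 * (p * (p - 1)) <= 2 * dist o s.
Proof.
move=> pp p2 cT abo nab.
have oG : #|GG Hs| = (2 * p)%N by rewrite card_GG.
apply: leq_trans (NC_card pp p2 oG nab) _.
apply: leq_trans (NC_NCb Hs) _.
exact: NCb_dist (comm_of_ab abo).
Qed.

Lemma bigmin_le (I : finType) (P : pred I) (F : I -> nat) x j :
  P j -> \big[minn/x]_(i | P i) F i <= F j.
Proof.
move=> Pj; have : j \in index_enum I by rewrite mem_index_enum.
elim: (index_enum I) => // i s IH; rewrite inE big_cons => /orP[/eqP <-|js].
  by rewrite Pj geq_minl.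
case: (P i); last exact: IH.
exact: leq_trans (geq_minr _ _) (IH js).
Qed.

Theorem lemma4p12 (p : nat) (T : finType) (o : binop T) :
  prime p -> 11 <= p -> #|T| = 2 * p -> is_group o ->
  delta_iso o < delta_noniso o.
Proof.
move=> pp p11 cT Ho.
have p2 : 2 < p by lia.
have [a ae] : exists a, a != e0 Ho.
  case: (pickP (fun x => x != e0 Ho)) => [a ae | H]; first by exists a.
  have : #|T| <= #|[set e0 Ho]|.
    apply: subset_leq_card; apply/subsetP => x _; rewrite inE; exact: negbFE (H x).
  by rewrite cards1 cT; lia.
set s0 := cop o (tperm (e0 Ho) a).
have up : delta_iso o <= 6 * #|T|.
  rewrite /delta_iso /delta_min.
  apply: leq_trans (bigmin_le _ _ _) (dist_cop ae).
  by rewrite cop_group // cop_iso cop_ne.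
apply: (leq_ltn_trans up).
rewrite /delta_noniso /delta_min.
apply: (big_ind (fun m => 6 * #|T| < m)).
- rewrite cT; nia.
- by move=> m1 m2 h1 h2; rewrite leq_min h1 h2.
move=> s /andP[Hs niso].
have dab : abelian (GG Ho) != abelian (GG Hs).
  apply: contra niso => /eqP ab; apply: (iso_of_isog (Ho := Ho) (Hs := Hs)).
  by apply: (iso_same pp p2); rewrite ?card_GG.
have key : 3 * (p * (p - 1)) <= 2 * dist o s.
  case: (boolP (abelian (GG Ho))) => abo.
    by apply: (dist_bound pp p2 cT abo); rewrite abo in dab.
  rewrite dist_sym; apply: (dist_bound pp p2 cT _ abo).
  by move: dab; rewrite (negbTE abo); case: (abelian _).
rewrite cT; nia.
Qed.
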